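(* Let $r\ge2$ be an integer and $\psi\in C_p(\mathbb{R})$. Then for every $n\in\mathbb{N}_0$, $k\in\{0,1,\dots,r^n-1\}$ and $y\in(0,1)$, $$\Delta_{n,k}(y;U_\psi)=\sum_{j=0}^{n-1} r^j\,\Delta_{n-j,k}(y;\psi)-\frac{2r^n}{y(1-y)}\,U_\psi(y),$$ where for $n=0$ the sum is interpreted as $0$.
   Context: $C_p(\mathbb{R})$ denotes the set of all continuous functions $f:\mathbb{R}\to\mathbb{R}$ periodic with period $1$ with $f(0)=0$; $\mathbb{N}_0=\mathbb{N}\cup\{0\}$. For $\psi\in C_p(\mathbb{R})$, $U_\psi(x)=\sum_{j=0}^\infty r^{-j}\psi(r^jx)$, $x\in\mathbb{R}$ (then $U_\psi\in C_p(\mathbb{R})$). For $f\in C_p(\mathbb{R})$ and $(n,k,y)\in\mathbb{N}_0\times\mathbb{Z}\times(0,1)$: $\delta^+_{n,k}(y;f)=\dfrac{f(\frac{k+1}{r^n})-f(\frac{k+y}{r^n})}{\frac{1-y}{r^n}}$, $\delta^-_{n,k}(y;f)=\dfrac{f(\frac{k+y}{r^n})-f(\frac{k}{r^n})}{\frac{y}{r^n}}$, $\Delta_{n,k}(y;f)=2r^n\big(\delta^+_{n,k}(y;f)-\delta^-_{n,k}(y;f)\big)$. *)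

(* Defs.v *)
From Stdlib Require Import Reals.
From Coquelicot Require Import Coquelicot.
Open Scope R_scope.

Definition Cp (f : R -> R) : Prop :=
  (forall x, continuous f x) /\ (forall x, f (x + 1) = f x) /\ f 0 = 0.

Definition U (r : R) (psi : R -> R) (x : R) : R :=
  Series (fun j : nat => / r ^ j * psi (r ^ j * x)).

Definition delta_plus (r : R) (n : nat) (k : Z) (y : R) (f : R -> R) : R :=
  (f ((IZR k + 1) / r ^ n) - f ((IZR k + y) / r ^ n)) / ((1 - y) / r ^ n).

Definition delta_minus (r : R) (n : nat) (k : Z) (y : R) (f : R -> R) : R :=
  (f ((IZR k + y) / r ^ n) - f (IZR k / r ^ n)) / (y / r ^ n).

Definition DeltaNK (r : R) (n : nat) (k : Z) (y : R) (f : R -> R) : R :=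
  2 * r ^ n * (delta_plus r n k y f - delta_minus r n k y f).

(* Main.v *)
Require Import Defs.
From Stdlib Require Import Reals List Lia Lra ZArith.
From Coquelicot Require Import Coquelicot.
Open Scope R_scope.

Lemma per_nat (psi : R -> R) : Cp psi -> forall (m : nat) x, psi (x + INR m) = psi x.
Proof.
  intros [_ [Hp _]] m; induction m as [|m IH]; intro x.
  - simpl; f_equal; ring.
  - rewrite S_INR. replace (x + (INR m + 1)) with ((x + INR m) + 1) by ring.
    rewrite Hp; apply IH.
Qed.

Lemma per_Z (psi : R -> R) : Cp psi -> forall (m : Z) x, psi (x + IZR m) = psi x.
Proof.
  intros H m x. destruct (Z_le_gt_dec 0 m) as [Hm|Hm].
  - rewrite <- (Z2Nat.id m Hm), <- INR_IZR_INZ. apply per_nat; auto.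
  - replace m with (- Z.of_nat (Z.to_nat (- m)))%Z by lia.
    rewrite opp_IZR, <- INR_IZR_INZ.
    rewrite <- (per_nat psi H (Z.to_nat (-m)) (x + - _)). f_equal; ring.
Qed.

Lemma per_int (psi : R -> R) : Cp psi -> forall (m : Z), psi (IZR m) = 0.
Proof.
  intros H m. pose proof H as [_ [_ H0]].
  replace (IZR m) with (0 + IZR m) by ring. rewrite per_Z; auto.
Qed.

Lemma bounded (psi : R -> R) : Cp psi -> exists M, forall x, Rabs (psi x) <= M.
Proof.
  intros H. pose proof H as [Hc _].
  assert (Hc' : forall c, 0 <= c <= 1 -> continuity_pt psi c).
  { intros c _. apply continuity_pt_filterlim, Hc. }
  destruct (continuity_ab_maj psi 0 1 ltac:(lra) Hc') as [Mx [HM _]].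
  destruct (continuity_ab_min psi 0 1 ltac:(lra) Hc') as [mx [Hm _]].
  exists (Rmax (Rabs (psi Mx)) (Rabs (psi mx))). intros x.
  destruct (Zfloor_bound x) as [H1 H2].
  replace x with ((x - IZR (Zfloor x)) + IZR (Zfloor x)) by ring.
  rewrite per_Z; auto.
  assert (Hb : 0 <= x - IZR (Zfloor x) <= 1) by lra.
  specialize (HM _ Hb); specialize (Hm _ Hb).
  unfold Rmax; destruct Rle_dec; unfold Rabs in *; repeat destruct Rcase_abs; lra.
Qed.

Lemma exs (r : R) (psi : R -> R) : 2 <= r -> Cp psi -> forall x,
  ex_series (fun j : nat => / r ^ j * psi (r ^ j * x)).
Proof.
  intros Hr H x. destruct (bounded psi H) as [M HM].
  apply (@ex_series_le R_AbsRing R_CompleteNormedModule _ (fun j => M * (/ r) ^ j)).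
  - intros j. rewrite <- Rinv_pow by lra. change norm with Rabs; simpl.
    assert (Hp : 0 < / r ^ j) by (apply Rinv_0_lt_compat, pow_lt; lra).
    rewrite Rabs_mult, (Rabs_right (/ r ^ j)) by lra. rewrite Rmult_comm.
    apply Rmult_le_compat_r; [lra|auto].
  - apply ex_series_scal_l with (c := M) (a := fun j => (/ r) ^ j). apply ex_series_geom.
    rewrite Rabs_right. apply (Rmult_lt_reg_l r); try lra. rewrite Rinv_r; lra.
    left; apply Rinv_0_lt_compat; lra.
Qed.

Lemma shift (a : nat -> R) (l : R) : forall n s,
  is_series (fun m => a (s + n + m)%nat) l ->
  is_series (fun m => a (s + m)%nat) (fold_right Rplus 0 (map a (seq s n)) + l).
Proof.
  induction n as [|n IH]; intros s H.
  - simpl. apply (is_series_ext _ _ _ (fun m => f_equal a (f_equal (fun t => (t + m)%nat) (Nat.add_0_r s)))) in H.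
    apply (is_series_ext _ _ _ (fun m => eq_refl)). replace (0 + l) with l by ring. exact H.
  - assert (H' : is_series (fun m => a (S s + n + m)%nat) l).
    { apply (is_series_ext (fun m => a (s + S n + m)%nat)); auto.
      intros m; f_equal; lia. }
    specialize (IH _ H').
    apply (is_series_decr_1 (fun m => a (s + m)%nat)).
    apply (is_series_ext (fun m => a (S s + m)%nat)).
    { intros m; f_equal; lia. }
    change plus with Rplus; change opp with Ropp.
    replace (fold_right Rplus 0 (map a (seq s (S n))) + l + - a (s + 0)%nat)
      with (fold_right Rplus 0 (map a (seq (S s) n)) + l); auto.
    rewrite Nat.add_0_r. simpl. ring.
Qed.

Lemma lin3 (a b c : nat -> R) la lb lc (K u v : R) :
  is_series a la -> is_series b lb -> is_series c lc ->
  is_series (fun j => K * ((a j - b j) / u - (b j - c j) / v))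
    (K * ((la - lb) / u - (lb - lc) / v)).
Proof.
  intros Ha Hb Hc.
  pose proof (is_series_minus _ _ _ _ Ha Hb) as H1.
  pose proof (is_series_minus _ _ _ _ Hb Hc) as H2.
  apply (is_series_scal_r (/ u)) in H1. apply (is_series_scal_r (/ v)) in H2.
  pose proof (is_series_minus _ _ _ _ H1 H2) as H3.
  apply (is_series_scal_l K) in H3. exact H3.
Qed.

Theorem theorem3p1 (r : nat) (psi : R -> R) :
  (2 <= r)%nat -> Cp psi ->
  forall (n : nat) (k : Z) (y : R),
    (0 <= k)%Z -> (k < Z.of_nat (r ^ n))%Z -> 0 < y < 1 ->
    DeltaNK (INR r) n k y (U (INR r) psi) =
      fold_right Rplus 0
        (map (fun j : nat => INR r ^ j * DeltaNK (INR r) (n - j) k y psi) (seq 0 n))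
      - 2 * INR r ^ n / (y * (1 - y)) * U (INR r) psi y.
Proof.
  intros Hr2 Hpsi n k y _ _ Hy.
  assert (Hr : 2 <= INR r) by (apply le_INR in Hr2; simpl in Hr2; lra).
  set (Rr := INR r) in *.
  assert (Hpow : forall m, 0 < Rr ^ m) by (intros; apply pow_lt; lra).
  assert (HpowZ : forall m, Rr ^ m = IZR (Z.of_nat (r ^ m))).
  { intros m. unfold Rr. rewrite <- pow_INR. apply INR_IZR_INZ. }
  set (a := fun x j => / Rr ^ j * psi (Rr ^ j * x)).
  set (p1 := (IZR k + 1) / Rr ^ n). set (py := (IZR k + y) / Rr ^ n). set (p0 := IZR k / Rr ^ n).
  set (b := fun j => 2 * Rr ^ n * ((a p1 j - a py j) / ((1 - y) / Rr ^ n)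
                                  - (a py j - a p0 j) / (y / Rr ^ n))).
  assert (HL : is_series b (DeltaNK Rr n k y (U Rr psi))).
  { unfold DeltaNK, delta_plus, delta_minus.
    apply lin3; apply Series_correct; apply exs; auto. }
  apply is_series_unique in HL. rewrite <- HL.
  apply is_series_unique.
  set (C := - (2 * Rr ^ n / (y * (1 - y)))).
  assert (Htail : is_series (fun m => b (0 + n + m)%nat) (C * U Rr psi y)).
  { apply (is_series_ext (fun m => C * a y m)).
    2: { apply (@is_series_scal_l R_AbsRing R_NormedModule C (a y)). apply Series_correct, exs; auto. }
    intros m. simpl. unfold b, a, p1, py, p0, C.
    rewrite pow_add.
    replace (Rr ^ n * Rr ^ m * ((IZR k + 1) / Rr ^ n)) with (y*0 + IZR (k * Z.of_nat (r ^ m) + Z.of_nat (r^m)))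
      by (rewrite plus_IZR, mult_IZR, <- HpowZ; specialize (Hpow n); field; lra).
    replace (Rr ^ n * Rr ^ m * (IZR k / Rr ^ n)) with (IZR (k * Z.of_nat (r ^ m)))
      by (rewrite mult_IZR, <- HpowZ; specialize (Hpow n); field; lra).
    replace (Rr ^ n * Rr ^ m * ((IZR k + y) / Rr ^ n)) with (Rr ^ m * y + IZR (k * Z.of_nat (r ^ m)))
      by (rewrite mult_IZR, <- HpowZ; specialize (Hpow n); field; lra).
    rewrite !(per_Z psi Hpsi), (per_int psi Hpsi), Rmult_0_r.
    destruct Hpsi as [_ [_ H0]]; rewrite H0.
    pose proof (Hpow n); pose proof (Hpow m). field; lra. }
  pose proof (shift b _ n 0 Htail) as HS.
  apply (is_series_ext _ _ _ (fun m => eq_refl)) in HS.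
  replace (fold_right Rplus 0 (map (fun j : nat => Rr ^ j * DeltaNK Rr (n - j) k y psi) (seq 0 n))
     - 2 * Rr ^ n / (y * (1 - y)) * U Rr psi y)
    with (fold_right Rplus 0 (map b (seq 0 n)) + C * U Rr psi y).
  { exact HS. }
  cut (map b (seq 0 n) = map (fun j : nat => Rr ^ j * DeltaNK Rr (n - j) k y psi) (seq 0 n)).
  { intros ->. unfold C. ring. }
  apply map_ext_in. intros j Hj. apply in_seq in Hj.
  unfold b, a, p1, py, p0, DeltaNK, delta_plus, delta_minus.
  assert (Hn : Rr ^ n = Rr ^ j * Rr ^ (n - j)).
  { rewrite <- pow_add. f_equal. lia. }
  rewrite !Hn. pose proof (Hpow j). pose proof (Hpow (n - j)%nat).
  replace (Rr ^ j * ((IZR k + 1) / (Rr ^ j * Rr ^ (n - j)))) with ((IZR k + 1) / Rr ^ (n - j)) by (field; lra).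
  replace (Rr ^ j * ((IZR k + y) / (Rr ^ j * Rr ^ (n - j)))) with ((IZR k + y) / Rr ^ (n - j)) by (field; lra).
  replace (Rr ^ j * (IZR k / (Rr ^ j * Rr ^ (n - j)))) with (IZR k / Rr ^ (n - j)) by (field; lra).
  field. lra.
Qed.
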